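(* Let $\mathbf{HC}=(h_n)_{n\ge 0}$ be the infinite Hilbert curve direction word defined in the context. Let $M$ be the deterministic finite automaton with output with state set $\{0,1,\dots,7\}$, input alphabet $\{0,1,2,3\}$, initial state $0$, and transition function $\delta$ and output function $\tau$ given by the following table (row $q$ lists $\delta(q,0),\delta(q,1),\delta(q,2),\delta(q,3)$ and then $\tau(q)$): $0: 0,1,2,3;\ \mathtt{U}$; $1: 1,0,4,5;\ \mathtt{R}$; $2: 1,0,4,6;\ \mathtt{D}$; $3: 7,6,5,0;\ \mathtt{R}$; $4: 0,1,2,7;\ \mathtt{L}$; $5: 6,7,3,1;\ \mathtt{U}$; $6: 6,7,3,2;\ \mathtt{L}$; $7: 7,6,5,4;\ \mathtt{D}$. Then for every $n\ge 0$, $h_n=\tau(\delta(0,(n)_4))$, where $(n)_4$ is the canonical base-$4$ representation of $n$ (most significant digit first, $(0)_4$ the empty word) and $\delta$ is extended to words in the usual way. In particular $\mathbf{HC}$ is $4$-automatic.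
   Context: Directions are letters of the alphabet $\{\mathtt{U},\mathtt{D},\mathtt{R},\mathtt{L}\}$ (up, down, right, left). Let $t_D$ be the letter-to-letter morphism with $t_D(\mathtt{U})=\mathtt{R}$, $t_D(\mathtt{D})=\mathtt{L}$, $t_D(\mathtt{R})=\mathtt{U}$, $t_D(\mathtt{L})=\mathtt{D}$ (flip about the main diagonal), and $t_H$ the morphism with $t_H(\mathtt{U})=\mathtt{D}$, $t_H(\mathtt{D})=\mathtt{U}$, $t_H(\mathtt{R})=\mathtt{L}$, $t_H(\mathtt{L})=\mathtt{R}$ ($180^\circ$ rotation). Define words $A_n$ by $A_0=\epsilon$ (empty word) and, for $n\ge 0$, $A_{2n+1}=A_{2n}\,\mathtt{U}\,t_D(A_{2n})\,\mathtt{R}\,t_D(A_{2n})\,\mathtt{D}\,t_H(A_{2n})$, $A_{2n+2}=A_{2n+1}\,\mathtt{R}\,t_D(A_{2n+1})\,\mathtt{U}\,t_D(A_{2n+1})\,\mathtt{L}\,t_H(A_{2n+1})$. Each $A_n$ is a prefix of $A_{n+1}$, and $\mathbf{HC}=h_0h_1h_2\cdots$ is the unique infinite word having every $A_n$ as a prefix (so $\mathbf{HC}=\mathtt{URDRRULURULLD}\cdots$). *)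

(* Defs.v *)
From HB Require Import structures.
From mathcomp Require Import all_boot.
Set Implicit Arguments. Unset Strict Implicit. Unset Printing Implicit Defensive.

Inductive dir := U | D | R | L.

Definition dir_eqb (a b : dir) : bool :=
  match a, b with U,U | D,D | R,R | L,L => true | _,_ => false end.
Lemma dir_eqP : Equality.axiom dir_eqb.
Proof. by case; case; constructor. Qed.
HB.instance Definition _ := hasDecEq.Build dir dir_eqP.

Definition tD1 (a : dir) : dir :=
  match a with U => R | D => L | R => U | L => D end.
Definition tH1 (a : dir) : dir :=
  match a with U => D | D => U | R => L | L => R end.
Definition tD (w : seq dir) : seq dir := map tD1 w.
Definition tH (w : seq dir) : seq dir := map tH1 w.

Fixpoint A (n : nat) : seq dir :=
  match n with
  | 0 => [::]
  | k.+1 =>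
    let a := A k in
    if odd k
    then a ++ [:: R] ++ tD a ++ [:: U] ++ tD a ++ [:: L] ++ tH a
    else
         a ++ [:: U] ++ tD a ++ [:: R] ++ tD a ++ [:: D] ++ tH a
  end.

(* The infinite word HC = h_0 h_1 ... : the unique word having every A_n as a
   prefix.  Since |A_{n+1}| = 4^{n+1} - 1 > n, the letter h_n is the n-th letter
   of A_{n+1} (U is only a dummy default for nth, never used). *)
Definition HC (n : nat) : dir := nth U (A n.+1) n.

Definition delta (q d : nat) : nat :=
  match q, d with
  | 0, 0 => 0 | 0, 1 => 1 | 0, 2 => 2 | 0, 3 => 3
  | 1, 0 => 1 | 1, 1 => 0 | 1, 2 => 4 | 1, 3 => 5
  | 2, 0 => 1 | 2, 1 => 0 | 2, 2 => 4 | 2, 3 => 6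
  | 3, 0 => 7 | 3, 1 => 6 | 3, 2 => 5 | 3, 3 => 0
  | 4, 0 => 0 | 4, 1 => 1 | 4, 2 => 2 | 4, 3 => 7
  | 5, 0 => 6 | 5, 1 => 7 | 5, 2 => 3 | 5, 3 => 1
  | 6, 0 => 6 | 6, 1 => 7 | 6, 2 => 3 | 6, 3 => 2
  | 7, 0 => 7 | 7, 1 => 6 | 7, 2 => 5 | 7, 3 => 4
  | _, _ => q (* unreachable: states are 0..7, digits 0..3 *)
  end.

Definition tau (q : nat) : dir :=
  match q with
  | 0 => U | 1 => R | 2 => D | 3 => R
  | 4 => L | 5 => U | 6 => L | _ => D
  end.

Definition delta_star (q : nat) (w : seq nat) : nat := foldl delta q w.

Fixpoint base4_rev (fuel n : nat) : seq nat :=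
  match fuel with
  | 0 => [::]
  | f.+1 => if n == 0 then [::] else (n %% 4) :: base4_rev f (n %/ 4)
  end.

(* canonical base-4 representation (n)_4, most significant digit first,
   (0)_4 = empty word; fuel n suffices since n %/ 4 < n for n > 0. *)
Definition base4 (n : nat) : seq nat := rev (base4_rev n n).

(* Main.v *)
Require Import Defs.
From mathcomp Require Import all_boot.
From mathcomp Require Import zify.

Fixpoint pad (k r : nat) : seq nat :=
  match k with 0 => [::] | k'.+1 => (r %/ 4 ^ k') :: pad k' (r %% 4 ^ k') end.

Lemma pad_last k r : r < 4 ^ k.+1 -> pad k.+1 r = pad k (r %/ 4) ++ [:: r %% 4].
Proof.
elim: k r => [|k IH] r hr.
  by rewrite /= divn1 modn_small.
have -> : pad k.+2 r = (r %/ 4^k.+1) :: pad k.+1 (r %% 4^k.+1) by [].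
rewrite IH; last by rewrite ltn_pmod // expn_gt0.
have -> : pad k.+1 (r %/ 4) = (r %/ 4 %/ 4^k) :: pad k (r %/ 4 %% 4^k) by [].
rewrite expnS divnMA modn_divl.
congr (_ :: _ ++ _).
  by rewrite mulnC.
by rewrite (modn_dvdm _ (dvdn_mulr _ (dvdnn 4))).
Qed.

Lemma pad0 k : pad k 0 = nseq k 0.
Proof. by elim: k => //= k IH; rewrite div0n mod0n IH. Qed.

Lemma ds0 k : delta_star 0 (nseq k 0) = 0.
Proof. by elim: k => // k IH; rewrite /delta_star /= -/(delta_star 0 _) IH. Qed.

Lemma pad_base4 f n k : n <= f -> n < 4 ^ k ->
  delta_star 0 (pad k n) = delta_star 0 (rev (base4_rev f n)).
Proof.
elim: f n k => [|f IH] n k hf hk.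
  have -> : n = 0 by lia.
  by rewrite pad0 ds0.
rewrite /=; case: eqP => [->|nz]; first by rewrite pad0 ds0.
case: k hk => [|k] hk; first by rewrite expn0 in hk; lia.
rewrite pad_last // rev_cons -cats1 /delta_star !foldl_cat.
have := IH (n %/ 4) k; rewrite /delta_star => -> //.
  rewrite -ltnS; apply: leq_trans hf; rewrite ltn_Pdiv //; lia.
by rewrite ltn_divLR // -expnSr.
Qed.

Lemma size_A k : size (A k) = 4 ^ k - 1.
Proof.
elim: k => // k IH /=.
have h : 0 < 4 ^ k by rewrite expn_gt0.
case: (odd k); rewrite /tD /tH !size_cat ?size_map /= IH.
all: rewrite !size_cat /= !size_cat /= !size_map IH expnS; lia.
Qed.

Lemma nth_skip (a b : seq dir) m : nth U (a ++ b) (size a + m) = nth U b m.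
Proof. by rewrite nth_cat ltnNge leq_addr addKn. Qed.

Definition Fj (j : nat) (c : dir) : dir :=
  match j with 0 => c | 1 | 2 => tD1 c | _ => tH1 c end.

Lemma nth_blk (a : seq dir) x1 x2 x3 j r :
  r < size a -> j < 4 ->
  nth U (a ++ [:: x1] ++ map tD1 a ++ [:: x2] ++ map tD1 a ++ [:: x3] ++ map tH1 a)
    (j * (size a).+1 + r) = Fj j (nth U a r).
Proof.
move=> hr hj; set s := size a.
case: j hj => [|[|[|[|j]]]] hj //.
- by rewrite mul0n add0n nth_cat hr.
- have -> : 1 * s.+1 + r = size a + (size [:: x1] + r) by rewrite /= /s; lia.
  by rewrite !nth_skip nth_cat size_map hr (nth_map U).
- have -> : 2 * s.+1 + r = size a + (size [:: x1] + (size (map tD1 a) + (size [:: x2] + r)))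
    by rewrite /= size_map /s; lia.
  by rewrite !nth_skip nth_cat size_map hr (nth_map U).
- have -> : 3 * s.+1 + r = size a + (size [:: x1] + (size (map tD1 a) + (size [:: x2] +
     (size (map tD1 a) + (size [:: x3] + r))))) by rewrite /= !size_map /s; lia.
  by rewrite !nth_skip (nth_map U).
Qed.

Lemma nth_blk2 (a : seq dir) x1 x2 x3 j :
  j < 3 ->
  nth U (a ++ [:: x1] ++ map tD1 a ++ [:: x2] ++ map tD1 a ++ [:: x3] ++ map tH1 a)
    (j * (size a).+1 + size a) = nth U [:: x1; x2; x3] j.
Proof.
move=> hj; set s := size a.
case: j hj => [|[|[|j]]] hj //.
- by rewrite mul0n add0n -[s]addn0 nth_skip.
- have -> : 1 * s.+1 + s = size a + (size [:: x1] + (size (map tD1 a) + 0)) by rewrite /= size_map /s; lia.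
  by rewrite !nth_skip.
- have -> : 2 * s.+1 + s = size a + (size [:: x1] + (size (map tD1 a) + (size [:: x2] +
     (size (map tD1 a) + 0)))) by rewrite /= !size_map /s; lia.
  by rewrite !nth_skip.
Qed.

Definition G (q : nat) (c : dir) : dir :=
  match q with 0 | 4 => c | 1 | 2 => tD1 c | 3 | 7 => tH1 c | _ => tD1 (tH1 c) end.
Definition E (q : nat) (b : bool) : dir := if b then tau (delta q 3) else tau q.
Definition X (b : bool) : seq dir := if b then [:: R; U; L] else [:: U; R; D].

Lemma fin_delta q j : q < 8 -> j < 4 -> delta q j < 8.
Proof.
move=> hq hj; do 8?[case: q hq => [|q] hq //]; by do 4?[case: j hj => [|j] hj //].
Qed.

Lemma fin1 q j c : q < 8 -> j < 4 -> G (delta q j) c = G q (Fj j c).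
Proof.
move=> hq hj; do 8?[case: q hq => [|q] hq //]; by do 4?[case: j hj => [|j] hj //]; case: c.
Qed.

Lemma fin2 q j b : q < 8 -> j < 3 -> E (delta q j) b = G q (nth U (X b) j).
Proof.
move=> hq hj; do 8?[case: q hq => [|q] hq //]; by do 3?[case: j hj => [|j] hj //]; case: b.
Qed.

Lemma fin3 q b : q < 8 -> E (delta q 3) b = E q (~~ b).
Proof. move=> hq; do 8?[case: q hq => [|q] hq //]; by case: b. Qed.

Lemma main k q r : q < 8 -> r < 4 ^ k ->
  tau (delta_star q (pad k r)) =
  if r < 4 ^ k - 1 then G q (nth U (A k) r) else E q (odd k).
Proof.
elim: k q r => [|k IH] q r hq hr.
  by have -> : r = 0 by rewrite expn0 in hr; lia.
have h4 : 0 < 4 ^ k by rewrite expn_gt0.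
have -> : delta_star q (pad k.+1 r) = delta_star (delta q (r %/ 4 ^ k)) (pad k (r %% 4 ^ k)) by [].
set j := r %/ 4 ^ k; set r' := r %% 4 ^ k.
have hj : j < 4 by rewrite ltn_divLR // -expnS.
have hr' : r' < 4 ^ k by rewrite ltn_pmod.
have er : r = j * (size (A k)).+1 + r' by rewrite size_A; rewrite {1}(divn_eq r (4 ^ k)); congr (_ * _ + _); lia.
rewrite IH //; last by apply: fin_delta.
have hs := size_A k.
have ->: A k.+1 = A k ++ [:: nth U (X (odd k)) 0] ++ map tD1 (A k) ++ [:: nth U (X (odd k)) 1]
   ++ map tD1 (A k) ++ [:: nth U (X (odd k)) 2] ++ map tH1 (A k).
  by rewrite /=; case: (odd k).
case: ltnP => hr'2.
  have -> : r < 4 ^ k.+1 - 1 by rewrite expnS; nia.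
  by rewrite er nth_blk ?fin1 // hs.
have er' : r' = size (A k) by lia.
case: (ltnP j 3) => hj3.
  have -> : r < 4 ^ k.+1 - 1 by rewrite expnS; nia.
  rewrite er er' nth_blk2 // fin2 //.
  by case: (odd k); case: (j) hj3 => [|[|[|]]].
have -> : (r < 4 ^ k.+1 - 1) = false by apply/negbTE; rewrite -leqNgt expnS; nia.
have -> : j = 3 by lia.
by rewrite fin3.
Qed.

Theorem mainTheorem1 : forall n : nat, HC n = tau (delta_star 0 (base4 n)).
Proof.
move=> n.
have hn : n < 4 ^ n.+1 - 1.
  have : n.+1 < 4 ^ n.+1 by apply: ltn_expl.
  lia.
rewrite /base4 -(@pad_base4 n n n.+1) //; last by lia.
by rewrite main //; [rewrite ifT | lia].
Show.
Qed.
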